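(* Let $n\geq 1$ and let $c$ be the center of the star $K_{1,n}$ (the vertex of degree $n$; either vertex if $n=1$). Then $\uparrow^{2}K_{1,n}$ has Laplacian perfect state transfer between the vertices $(0,c)$ and $(1,c)$ (which have degree $2n$) if and only if $n$ is odd.
   Context: All graphs are simple, undirected and unweighted. $K_{1,n}$ is the star with one center adjacent to $n$ leaves. The blow-up $\uparrow^{2}G$ has vertex set $\mathbb{Z}_2\times V(G)$, with $(l,a)\sim(m,b)$ iff $a\sim b$ in $G$. A graph with Laplacian $L=D-A$ has Laplacian perfect state transfer between $a,b$ if $\exp(i\tau L)\mathbf{e}_a=\gamma\mathbf{e}_b$ for some $\tau>0$, $\gamma\in\mathbb{C}$. *)

(* Defs.v *)
From HB Require Import structures.
From mathcomp Require Import all_boot all_order all_algebra.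
From mathcomp Require Import all_classical all_reals topology normedtype sequences.
From mathcomp.real_closed Require Import complex.
Set Implicit Arguments. Unset Strict Implicit. Unset Printing Implicit Defensive.
Import Order.TTheory GRing.Theory Num.Theory.
Import numFieldNormedType.Exports.
Local Open Scope ring_scope.
Local Open Scope complex_scope.

(* Matrix exponential over C = R[i], entrywise limit of partial sums
   sum_{k<N} A^k / k!  (the series always converges). *)
Definition expmx (R : realType) (m : nat) (A : 'M[R[i]]_m) : 'M[R[i]]_m :=
  \matrix_(p, q) limn (fun N : nat =>
    ((\sum_(k < N) (k`!%:R)^-1 *: A ^+ k) p q : (R[i] : numFieldType))).

(* A simple graph on a finite vertex type T is given by a symmetric,
   irreflexive boolean relation e. Vertices are indexed in matrices via enum_rank. *)
Definition degree (T : finType) (e : rel T) (x : T) : nat := #|[set y | e x y]|.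

Definition laplacian (R : realType) (T : finType) (e : rel T) : 'M[R[i]]_#|T| :=
  \matrix_(p, q)
    ((if p == q then (degree e (enum_val p))%:R else 0)
     - (e (enum_val p) (enum_val q))%:R).

Definition evec (R : realType) (T : finType) (x : T) : 'cV[R[i]]_#|T| :=
  delta_mx (enum_rank x) 0.

Definition lap_PST (R : realType) (T : finType) (e : rel T) (a b : T) : Prop :=
  exists tau : R, 0 < tau /\
    exists gamma : R[i],
      expmx (('i * tau%:C) *: laplacian R e) *m evec R a = gamma *: evec R b.

Definition star_graph (n : nat) : rel 'I_n.+1 :=
  fun x y => (x == ord0) (+) (y == ord0).

Definition blowup2 (V : finType) (e : rel V) : rel ('I_2 * V) :=
  fun x y => e x.2 y.2.
Arguments star_graph n : clear implicits.

(* Main.v *)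
Require Import Defs.
From HB Require Import structures.
From mathcomp Require Import all_boot all_order all_algebra.
From mathcomp Require Import all_classical all_reals topology normedtype sequences trigo.
From mathcomp.real_closed Require Import complex.
From mathcomp Require Import ring lra.
Set Implicit Arguments. Unset Strict Implicit. Unset Printing Implicit Defensive.
Import Order.TTheory GRing.Theory Num.Theory.
Import numFieldNormedType.Exports.
Local Open Scope ring_scope.
Local Open Scope complex_scope.
Local Open Scope classical_set_scope.

Section Trig.
Variable R : realType.
Local Notation C := (R[i] : numFieldType).

Lemma cvg_cos_series (t : R) : series (cos_coeff t) @ \oo --> cos t.
Proof. rewrite cosE /= -cos_coeffE; exact: is_cvg_series_cos_coeff. Qed.
Lemma cvg_sin_series (t : R) : series (sin_coeff t) @ \oo --> sin t.
Proof. rewrite unlock; exact: is_cvg_series_sin_coeff. Qed.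

Lemma normC_real (x : R) : `|x%:C| = (`|x|)%:C :> C.
Proof. by rewrite normc_def /= expr0n /= addr0 sqrtr_sqr. Qed.

Lemma normC_i : `|'i| = 1 :> C.
Proof. by rewrite normc_def /= expr0n /= expr1n add0r sqrtr1. Qed.

Lemma cvgC (u v : nat -> R) (a b : R) : u @ \oo --> a -> v @ \oo --> b ->
  ((fun N => (u N)%:C + 'i * (v N)%:C) : nat -> C) @ \oo --> (a%:C + 'i * b%:C : C).
Proof.
move=> /cvgrPdist_lt hu /cvgrPdist_lt hv; apply/cvgrPdist_lt => eps eps0.
move: (eps0).
rewrite ltcE /= => /andP[/eqP Ie Re0].
have r2 : 0 < complex.Re eps / 2 by rewrite divr_gt0.
near=> N.
have h1 : `|a - u N| < complex.Re eps / 2 by near: N; exact: hu.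
have h2 : `|b - v N| < complex.Re eps / 2 by near: N; exact: hv.
have -> : a%:C + 'i * b%:C - ((u N)%:C + 'i * (v N)%:C) = (a - u N)%:C + 'i * (b - v N)%:C.
  by rewrite !rmorphB /=; ring.
apply: (le_lt_trans (ler_normD _ _)).
rewrite normrM normC_i mul1r !normC_real.
have -> : eps = (complex.Re eps)%:C by rewrite [LHS]complexE Ie rmorph0 mulr0 addr0.
rewrite -rmorphD ltcR; lra.
Unshelve. all: by end_near.
Qed.


Definition sN (N : nat) (z : C) : C := \sum_(k < N) (k`!%:R)^-1 * z ^+ k.
Definition Ex (t : R) : C := (cos t)%:C + 'i * (sin t)%:C.

Lemma i_double m : 'i ^+ m.*2 = (-1) ^+ m :> C.
Proof. by rewrite -mul2n exprM sqr_i. Qed.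

Lemma term (t : R) k :
  (k`!%:R)^-1 * ('i * t%:C) ^+ k = (cos_coeff t k)%:C + 'i * (sin_coeff t k)%:C :> C.
Proof.
rewrite /cos_coeff /sin_coeff /= exprMn.
have [ok|ek] := boolP (odd k).
  have hk : k = (k./2).*2.+1 by rewrite -[LHS](odd_double_half k) ok.
  have -> : k.-1./2 = k./2 by rewrite [in LHS]hk /= doubleK.
  rewrite [in 'i ^+ _]hk exprS i_double /= ?(esym (exprnP _ _)).
  rewrite !(rmorphM, rmorphXn, rmorphN1, fmorphV, rmorph_nat, rmorph1) /=.
  ring.
have hk : k = (k./2).*2 by rewrite -[LHS](odd_double_half k) (negbTE ek).
rewrite [in 'i ^+ _]hk i_double /= ?(esym (exprnP _ _)).
rewrite !(rmorphM, rmorphXn, rmorphN1, fmorphV, rmorph_nat, rmorph1, rmorph0) /=.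
ring.
Qed.

Lemma cvg_sN t : (fun N => sN N ('i * t%:C)) @ \oo --> Ex t.
Proof.
have -> : (fun N => sN N ('i * t%:C)) =
   (fun N => (series (cos_coeff t) N)%:C + 'i * (series (sin_coeff t) N)%:C).
  apply/funext => N; rewrite /sN /series /= !big_mkord.
  under eq_bigr do rewrite term.
  by rewrite big_split /= -mulr_sumr -!rmorph_sum.
rewrite /Ex; exact: cvgC (cvg_cos_series (t:=t)) (cvg_sin_series (t:=t)).
Qed.

Lemma ExD a b : Ex (a + b) = Ex a * Ex b.
Proof.
rewrite /Ex cosD sinD !(rmorphB, rmorphD, rmorphM) /=.
have hi : 'i * 'i = -1 :> C by rewrite -expr2 sqr_i.
set ca := (cos a)%:C; set cb := (cos b)%:C; set sa := (sin a)%:C; set sb := (sin b)%:C.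
have -> : (ca + 'i * sa) * (cb + 'i * sb) = ca * cb + ('i * 'i) * (sa * sb) + 'i * (sa * cb + ca * sb) by ring.
rewrite hi; ring.
Qed.

Lemma Ex0 : Ex 0 = 1.
Proof. by rewrite /Ex cos0 sin0 rmorph0 rmorph1 mulr0 addr0. Qed.

Lemma ExMn a k : Ex (a *+ k) = Ex a ^+ k.
Proof. elim: k => [|k IH]; first by rewrite mulr0n Ex0 expr0.
by rewrite mulrS ExD IH exprS. Qed.

Lemma Expi k : Ex (pi *+ k) = (-1) ^+ k.
Proof.
have := alternatingn (@cosDpi R) k 0; have := alternatingn (@sinDpi R) k 0.
rewrite !add0r cos0 sin0 mulr0 mulr1 /Ex => -> ->.
by rewrite rmorph0 mulr0 addr0 rmorphXn rmorphN1.
Qed.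

End Trig.

Section Generic.
Variables (R : realType) (T : finType) (e : rel T).
Local Notation C := (R[i] : numFieldType).

Definition colf (f : T -> C) : 'cV[C]_#|T| := \col_p f (enum_val p).
Definition lapf (f : T -> C) (x : T) : C := \sum_y (e x y)%:R * (f x - f y).

Lemma sum_enum (F : T -> C) : \sum_(j < #|T|) F (enum_val j) = \sum_y F y.
Proof.
rewrite [RHS](reindex (fun j : 'I_#|T| => enum_val j)) //; apply: onW_bij.
by exists enum_rank; [exact: enum_valK | exact: enum_rankK].
Qed.

Lemma degE x : (degree e x)%:R = \sum_y (e x y)%:R :> C.
Proof.
rewrite /degree -sum1_card natr_sum big_mkcond /=; apply: eq_bigr => y _.
by rewrite inE; case: (e x y).
Qed.

Lemma lapE f : laplacian R e *m colf f = colf (lapf f).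
Proof.
apply/matrixP => p q; rewrite !mxE.
under eq_bigr do rewrite !mxE mulrBl.
rewrite sumrB.
under eq_bigr do rewrite (fun_if (fun z => z * _)) mul0r.
rewrite -big_mkcond /= (big_pred1 p); last by move=> j; rewrite eq_sym.
rewrite (sum_enum (fun y => (e (enum_val p) y)%:R * f y)).
rewrite /lapf -[X in _ = X](@eq_bigr _ _ _ _ _ _ (fun y => (e (enum_val p) y)%:R * f (enum_val p) - (e (enum_val p) y)%:R * f y)); last by move=> y _; rewrite mulrBr.
by rewrite sumrB -mulr_suml degE.
Qed.

Lemma colf_eig f (l : C) : (forall x, lapf f x = l * f x) -> colf (lapf f) = l *: colf f.
Proof. by move=> H; apply/matrixP => p q; rewrite !mxE H. Qed.

Lemma powE (c l : C) f : (forall x, lapf f x = l * f x) ->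
  forall k, (c *: laplacian R e) ^+ k *m colf f = (c * l) ^+ k *: colf f.
Proof.
move=> H; elim=> [|k IH]; first by rewrite !expr0 mul1mx scale1r.
rewrite exprS -mulmxE -mulmxA IH -scalemxAr -scalemxAl lapE (colf_eig H).
rewrite !scalerA exprS; congr (_ *: _); ring.
Qed.

Lemma partialE (c l : C) f N : (forall x, lapf f x = l * f x) ->
  (\sum_(k < N) (k`!%:R)^-1 *: (c *: laplacian R e) ^+ k) *m colf f
   = sN N (c * l) *: colf f.
Proof.
move=> H; rewrite mulmx_suml; under eq_bigr do rewrite -scalemxAl (powE c H) scalerA.
by rewrite -scaler_suml.
Qed.

Lemma evecE a : evec R a = colf (fun x => (x == a)%:R).
Proof.
apply/matrixP => p q; rewrite !mxE ord1 eqxx andbT.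
by rewrite -{1}(enum_valK p) (inj_eq enum_rank_inj).
Qed.

Lemma mul_evec (M : 'M[C]_#|T|) a p : (M *m evec R a) p 0 = M p (enum_rank a).
Proof.
rewrite mxE (bigD1 (enum_rank a)) //= /evec mxE eqxx /= mulr1 big1 ?addr0 //.
by move=> j /negPf; rewrite mxE => ->; rewrite mulr0.
Qed.

End Generic.

Section Star.
Variables (R : realType) (n : nat).
Local Notation C := (R[i] : numFieldType).
Local Notation T := ('I_2 * 'I_n.+1)%type.
Local Notation e := (blowup2 (star_graph n)).

Definition shape (g : 'I_2 -> C) (h : C) (x : T) : C :=
  if x.2 == ord0 then g x.1 else h.

Lemma sumT (F : T -> C) : \sum_y F y = \sum_(m < 2) \sum_(c < n.+1) F (m, c).
Proof. by rewrite pair_bigA /=; apply: eq_bigr => -[]. Qed.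

Lemma L0 (j : 'I_n) : (lift ord0 j == ord0 :> 'I_n.+1) = false.
Proof. by apply/negbTE; rewrite eq_sym; apply: neq_lift. Qed.

Lemma I2max : lift ord0 ord0 = ord_max :> 'I_2.
Proof. exact: val_inj. Qed.

Lemma lap_shape g h x : lapf e (shape g h) x =
  if x.2 == ord0 then 2 * n%:R * (g x.1 - h) else h *+ 2 - g ord0 - g ord_max.
Proof.
case: x => l b /=; rewrite /lapf sumT !big_ord_recl !big_ord0 !addr0 /=.
rewrite /blowup2 /star_graph /shape /= I2max.
under eq_bigr do rewrite L0.
case: (b == ord0) => /=; rewrite !sumr_const !card_ord !mul0r !mul1r ?mul0rn ?add0r ?addr0.
  by rewrite -mulr2n -mulrA !mulr_natl.
by rewrite mulr2n addrACA addrA.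
Qed.


Definition dd : C := n%:R + 1.
Lemma dd_neq0 : dd != 0.
Proof. by rewrite /dd natr1 pnatr_eq0. Qed.
Lemma two_neq0 : (2 : C) != 0.
Proof. by rewrite pnatr_eq0. Qed.

Definition P0 := shape (fun _ => (2 * dd)^-1) (2 * dd)^-1.
Definition Pv := shape (fun _ => n%:R / (2 * dd)) (- (2 * dd)^-1).
Definition Pu := shape (fun m => if m == ord0 then 2^-1 else - 2^-1) 0.

Lemma eigP0 x : lapf e P0 x = 0 * P0 x.
Proof.
rewrite lap_shape /P0 /shape mul0r; case: ifP => _; first by rewrite subrr mulr0.
by rewrite mulr2n addrK subrr.
Qed.

Lemma eigPv x : lapf e Pv x = (2 * dd) * Pv x.
Proof.
have h1 := dd_neq0; have h2 := two_neq0.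
rewrite lap_shape /Pv /shape; case: ifP => _; rewrite ?mulr2n /dd; field;
  by rewrite ?mulf_neq0.
Qed.

Lemma eigPu x : lapf e Pu x = (2 * n%:R) * Pu x.
Proof.
rewrite lap_shape /Pu /shape; case: ifP => _; first by rewrite subr0.
by rewrite eqxx /= mul0rn sub0r opprK addNr mulr0.
Qed.

Lemma I2P (l : 'I_2) : l = ord0 \/ l = ord_max.
Proof. by case: l => [[|[|//]]] H; [left|right]; apply: val_inj. Qed.

Lemma decomp x : P0 x + Pv x + Pu x = (x == (ord0, ord0))%:R.
Proof.
have h1 := dd_neq0; have h2 := two_neq0.
case: x => l b; rewrite /P0 /Pv /Pu /shape xpair_eqE /=.
case: (b == ord0); last by rewrite andbF addr0 addrN.
rewrite andbT; case: (I2P l) => ->; rewrite /= /dd; field; by rewrite ?mulf_neq0.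
Qed.

End Star.

Section Main.
Variables (R : realType) (n : nat).
Local Notation C := (R[i] : numFieldType).
Local Notation T := ('I_2 * 'I_n.+1)%type.
Local Notation e := (blowup2 (star_graph n)).
Local Notation a := ((@ord0 1, @ord0 n) : T).

Lemma colf_decomp : colf (fun x : T => (x == a)%:R) =
  colf ((@P0 R n)) + colf ((@Pv R n)) + colf ((@Pu R n)).
Proof. by apply/matrixP => p q; rewrite !mxE -decomp. Qed.

Lemma mainE (tau : R) (x : T) :
  (expmx (('i * tau%:C) *: laplacian R e) *m evec R a) (enum_rank x) 0 =
  (@P0 R n) x + Ex (tau * (2 * (n%:R + 1))) * (@Pv R n) x + Ex (tau * (2 * n%:R)) * (@Pu R n) x.
Proof.
rewrite mul_evec /expmx mxE.
set c := 'i * tau%:C.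
have HS : forall N, ((\sum_(k < N) (k`!%:R)^-1 *: (c *: laplacian R e) ^+ k)
     (enum_rank x) (enum_rank a) : C) =
   sN N (c * 0) * (@P0 R n) x + sN N (c * (2 * (@dd R n))) * (@Pv R n) x + sN N (c * (2 * n%:R)) * (@Pu R n) x.
  move=> N; rewrite -mul_evec evecE colf_decomp !mulmxDr.
  rewrite (partialE c _ (@eigP0 R n)) (partialE c _ (@eigPv R n)) (partialE c _ (@eigPu R n)).
  by rewrite !mxE enum_rankK.
rewrite (funext HS).
have hc : forall r : R, c * r%:C = 'i * (tau * r)%:C by move=> r; rewrite rmorphM mulrA.
have -> : (0 : C) = (0 : R)%:C by rewrite rmorph0.
have -> : (2 * (@dd R n) : C) = (2 * (n%:R + 1) : R)%:C.
  by rewrite /dd !(rmorphM, rmorphD, rmorph_nat, rmorph1).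
have -> : (2 * n%:R : C) = (2 * n%:R : R)%:C.
  by rewrite !(rmorphM, rmorph_nat).
rewrite !hc.
apply: (@cvg_lim C); first exact: norm_hausdorff.
have E0' : (@P0 R n x) = Ex (tau * 0) * (@P0 R n x) by rewrite mulr0 Ex0 mul1r.
rewrite {2}E0'.
apply: (@cvgD C C); first apply: (@cvgD C C). all: apply: cvgMr_tmp; exact: (@cvg_sN R _).
Qed.

End Main.

Lemma pst_iff (R : realType) (n : nat) (hn : (0 < n)%N) :
  lap_PST R (blowup2 (star_graph n)) (@ord0 1, @ord0 n) (@ord_max 1, @ord0 n) <-> odd n.
Proof.
have h1 := @dd_neq0 R n; have h2 := @two_neq0 R.
set a := (@ord0 1, @ord0 n); set b := (@ord_max 1, @ord0 n).
have evb : forall (g : R[i]) (x : ('I_2 * 'I_n.+1)%type),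
    (g *: evec R b) (enum_rank x) 0 = g * (x == b)%:R.
  by move=> g x; rewrite evecE !mxE enum_rankK.
split.
- case=> tau [tau0 [g H]].
  set E2 := Ex (tau * (2 * (n%:R + 1))); set E1 := Ex (tau * (2 * n%:R)).
  have Hx : forall x, @P0 R n x + E2 * @Pv R n x + E1 * @Pu R n x = g * (x == b)%:R.
    by move=> x; rewrite -mainE H evb.
  have E2_1 : E2 = 1.
    have := Hx (ord0, lift ord0 (Ordinal hn)).
    rewrite /P0 /Pv /Pu /shape /= !mulr0 addr0.
    move=> /eqP; rewrite mulrN addr_eq0 opprK -{1}[(2 * dd R n)^-1]mul1r.
    rewrite (inj_eq (mulIf _)) ?invr_eq0 ?mulf_neq0 //.
    by move/eqP.
  have E1_m1 : E1 = -1.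
    have := Hx a.
    rewrite /P0 /Pv /Pu /shape /= mulr0 E2_1 mul1r.
    move=> /eqP; rewrite addr_eq0 => /eqP HE.
    have : E1 * 2^-1 = (-1) * 2^-1.
      by rewrite -[E1 * 2^-1]opprK -HE /dd; field; rewrite ?mulf_neq0.
    by move/(mulIf _); apply; rewrite invr_eq0.
  have eA1 : tau * (2 * n%:R) = (tau * 2) *+ n by rewrite -[RHS]mulr_natr mulrA.
  have eA2 : tau * (2 * (n%:R + 1)) = (tau * 2) *+ n.+1.
    by rewrite -[RHS]mulr_natr natr1 mulrA.
  move: E2_1 E1_m1; rewrite /E2 /E1 eA1 eA2 !ExMn exprS => H2 H1.
  rewrite H1 mulrN1 in H2.
  have Ha : Ex (tau * 2) = -1 by rewrite -[LHS]opprK H2.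
  move: H1; rewrite Ha -signr_odd; case: (odd n) => //= /eqP.
  rewrite expr0 -addr_eq0 => /eqP h.
  by have := h2; rewrite -h eqxx.
- move=> on; exists (pi / 2); split; first by rewrite divr_gt0 // pi_gt0.
  exists 1; apply/matrixP => p q; rewrite ord1 -(enum_valK p) mainE evb.
  have e1 : pi / 2 * (2 * n%:R) = pi *+ n :> R by rewrite -mulr_natr; field.
  have e2 : pi / 2 * (2 * (n%:R + 1)) = pi *+ n.+1 :> R
    by rewrite -mulr_natr -natr1; field.
  rewrite e1 e2 !Expi -signr_odd /= on /= expr0 -signr_odd on expr1.
  set x := enum_val p; case: x => l c; rewrite /P0 /Pv /Pu /shape xpair_eqE /=.
  case: (c == ord0); last by rewrite andbF !mulr0 addr0 mul1r addrN.
  rewrite andbT; case: (I2P l) => ->; rewrite /= /dd; field; by rewrite ?mulf_neq0.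
Qed.

Theorem corollary11 (R : realType) (n : nat) (hn : (1 <= n)%N) :
  lap_PST R (blowup2 (star_graph n)) (@ord0 1, @ord0 n) (@ord_max 1, @ord0 n) <-> odd n.
Proof. exact: pst_iff. Qed.
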